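(* Let \[ \mathfrak m=\left\{\begin{pmatrix} 0 & 0 & 0 & 0 & 0 & 0 & 0\\ u_1 & 0 & 0 & 0 & 0 & 0 & 0\\ u_2 & u_3 & 0 & 0 & 0 & 0 & 0\\ u_4 & 4u_2 & -4u_1 & 0 & 0 & 0 & 0\\ u_5 & -2u_4 & 0 & 4u_1 & 0 & 0 & 0\\ u_6 & 0 & 2u_4 & -4u_2 & -u_3 & 0 & 0\\ 0 & -u_6 & -u_5 & -u_4 & -u_2 & -u_1 & 0 \end{pmatrix} \;:\; u_1,\dots,u_6\in\mathbb R\right\}, \] a maximal nilpotent subalgebra of $\mathfrak g_{2(2)}$. Then $\mathfrak m$ does not contain a three-dimensional Lie subalgebra $\mathfrak b$ all of whose non-zero elements are matrices of rank two.
   Context: $\mathfrak g_{2(2)}$ is the Lie algebra of the split real form $\mathrm G_{2(2)}$ of $\mathrm G_2^{\mathbb C}$, realized (in a suitable Witt basis) as a subalgebra of $\mathfrak{so}_{4,3}$; $\mathfrak m$ is the set of strictly lower triangular matrices in this realization. *)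

(* Defs.v *)
From HB Require Import structures.
From mathcomp Require Import all_boot all_order all_algebra.
From mathcomp Require Export reals.
Set Implicit Arguments. Unset Strict Implicit. Unset Printing Implicit Defensive.
Import Order.TTheory GRing.Theory Num.Theory.
Local Open Scope ring_scope.

(* entries of the generic element of m, indexed from 0 *)
Definition mentry (R : realType) (u1 u2 u3 u4 u5 u6 : R) (i j : nat) : R :=
  match i, j with
  | 1, 0 => u1
  | 2, 0 => u2 | 2, 1 => u3
  | 3, 0 => u4 | 3, 1 => 4 * u2 | 3, 2 => - (4 * u1)
  | 4, 0 => u5 | 4, 1 => - (2 * u4) | 4, 3 => 4 * u1
  | 5, 0 => u6 | 5, 2 => 2 * u4 | 5, 3 => - (4 * u2) | 5, 4 => - u3
  | 6, 1 => - u6 | 6, 2 => - u5 | 6, 3 => - u4 | 6, 4 => - u2 | 6, 5 => - u1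
  | _, _ => 0
  end.

Definition mmat (R : realType) (u1 u2 u3 u4 u5 u6 : R) : 'M[R]_7 :=
  \matrix_(i < 7, j < 7) mentry u1 u2 u3 u4 u5 u6 i j.

Definition in_m (R : realType) (A : 'M[R]_7) : Prop :=
  exists u1 u2 u3 u4 u5 u6 : R, A = mmat u1 u2 u3 u4 u5 u6.

Definition lie_br (R : realType) (A B : 'M[R]_7) : 'M[R]_7 := A *m B - B *m A.

(* Main.v *)
Require Import Defs.
From HB Require Import structures.
From mathcomp Require Import all_boot all_order all_algebra.
From mathcomp Require Import reals.
From mathcomp Require Import ring zify.
From Stdlib Require Import Classical.
Import GRing.Theory Num.Theory.
Local Open Scope ring_scope.



Definition ent {R : Type} (A : 'M[R]_3) (i j : nat) := A (inord i) (inord j).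

Lemma det3 (R : comNzRingType) (A : 'M[R]_3) :
  \det A = ent A 0 0 * (ent A 1 1 * ent A 2 2 - ent A 1 2 * ent A 2 1)
          - ent A 0 1 * (ent A 1 0 * ent A 2 2 - ent A 1 2 * ent A 2 0)
          + ent A 0 2 * (ent A 1 0 * ent A 2 1 - ent A 1 1 * ent A 2 0).
Proof.
set B := \matrix_(i < 3, j < 3) ent A i j.
have -> : \det A = \det B by congr (\det _); apply/matrixP=> i j; rewrite mxE /ent !inord_val.
rewrite (expand_det_row _ 0) !big_ord_recl big_ord0 /cofactor.
rewrite !(expand_det_row _ 0) !big_ord_recl big_ord0 /cofactor !det_mx11 /=.
rewrite !mxE !big_ord0 /bump /=. ring.
Qed.

Lemma rank_minor (F : fieldType) (A : 'M[F]_7) (f g : 'I_3 -> 'I_7) :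
  (\rank A <= 2)%N -> \det (mxsub f g A) = 0.
Proof.
move=> rk; apply/eqP; apply: contraTT rk => hdet; rewrite -ltnNge.
have h3 : \rank (mxsub f g A) = 3%N by apply: mxrank_unit; rewrite unitmxE unitfE.
have e1 := mxrankS (rowsub_sub f (colsub g A)).
have e2 : \rank (colsub g A) = \rank (rowsub g A^T).
  by rewrite -mxrank_tr trmx_mxsub.
have e3 := mxrankS (rowsub_sub g A^T).
rewrite mxrank_tr in e3.
have : (3 <= \rank A)%N.
  rewrite -[X in (X <= _)%N]h3 (_ : mxsub f g A = rowsub f (colsub g A)); last by apply/matrixP=> i j; rewrite !mxE.
  by apply: (leq_trans e1); rewrite e2.
by [].
Qed.



Definition sel (a b c : nat) : 'I_3 -> 'I_7 := fun i => inord (nth 0%N [:: a; b; c] i).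

Lemma sel_val a b c i : (a < 7)%N -> (b < 7)%N -> (c < 7)%N -> (i < 3)%N ->
  nat_of_ord (sel a b c (inord i)) = nth 0%N [:: a; b; c] i.
Proof.
move=> ha hb hc hi; rewrite /sel inordK //= inordK //.
by case: i hi => [|[|[|]]].
Qed.

Lemma goodP (R : realType) (u1 u2 u3 u4 u5 u6 : R) :
  (\rank (mmat u1 u2 u3 u4 u5 u6) <= 2)%N ->
  [/\ u1 = 0, 4 * u2 ^+ 2 = u3 * u4, u4 * (u4 ^+ 2 + 2 * u2 * u5) = 0
    & u3 * (2 * u2 * u4 + u3 * u5) = 0].
Proof.
move=> rk.
have M a b c d e g := @rank_minor _ _ (sel a b c) (sel d e g) rk.
have h1 := M 1%N 3%N 4%N 0%N 2%N 3%N.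
rewrite det3 /ent !mxE !sel_val //= in h1.
have e1 : u1 = 0.
  have : u1 ^+ 3 * (- 16) = 0 by rewrite -h1; ring.
  move/eqP; rewrite mulf_eq0 expf_eq0 /= oppr_eq0 pnatr_eq0 orbF => /eqP //.
subst u1.
have ha := M 3%N 5%N 6%N 1%N 3%N 4%N.
rewrite det3 /ent !mxE !sel_val //= in ha.
have hb := M 2%N 5%N 6%N 1%N 3%N 4%N.
rewrite det3 /ent !mxE !sel_val //= in hb.
have hc := M 4%N 5%N 6%N 1%N 3%N 4%N.
rewrite det3 /ent !mxE !sel_val //= in hc.
have hd := M 3%N 4%N 5%N 0%N 1%N 2%N.
rewrite det3 /ent !mxE !sel_val //= in hd.
have he := M 2%N 4%N 5%N 0%N 1%N 4%N.
rewrite det3 /ent !mxE !sel_val //= in he.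
have hQ : 4 * u2 ^+ 2 - u3 * u4 = 0.
  apply/eqP; rewrite -sqrf_eq0; apply/eqP.
  have -> : (4 * u2 ^+ 2 - u3 * u4) ^+ 2 = u2 * (4 * u2 * (4 * u2 ^+ 2 - u3 * u4)) - u4 * (u3 * (4 * u2 ^+ 2 - u3 * u4)) by ring.
  have -> : 4 * u2 * (4 * u2 ^+ 2 - u3 * u4) = 0 by rewrite -ha; ring.
  have -> : u3 * (4 * u2 ^+ 2 - u3 * u4) = 0 by rewrite -hb; ring.
  ring.
split => //.
- by apply/eqP; rewrite -subr_eq0 hQ.
- have : u4 * (u4 ^+ 2 + 2 * u2 * u5) * (-4) = 0 by rewrite -hd; ring.
  move/eqP; rewrite mulf_eq0 oppr_eq0 pnatr_eq0 orbF => /eqP //.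
- by rewrite -he; ring.
Qed.
Arguments goodP {R u1 u2 u3 u4 u5 u6}.



Definition cf {R : Type} (A : 'M[R]_7) (i j : nat) := A (inord i) (inord j).

Lemma cf_mmat (R : realType) (u1 u2 u3 u4 u5 u6 : R) i j : (i < 7)%N -> (j < 7)%N ->
  cf (mmat u1 u2 u3 u4 u5 u6) i j = mentry u1 u2 u3 u4 u5 u6 i j.
Proof. by move=> hi hj; rewrite /cf mxE !inordK. Qed.

Lemma cfD (R : realType) (A B : 'M[R]_7) i j : cf (A + B) i j = cf A i j + cf B i j.
Proof. by rewrite /cf mxE. Qed.
Lemma cfZ (R : realType) (a : R) (A : 'M[R]_7) i j : cf (a *: A) i j = a * cf A i j.
Proof. by rewrite /cf mxE. Qed.

Definition E1 (R : realType) : 'M[R]_7 := mmat 1 0 0 0 0 0.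
Definition E2 (R : realType) : 'M[R]_7 := mmat 0 1 0 0 0 0.
Definition E3 (R : realType) : 'M[R]_7 := mmat 0 0 1 0 0 0.
Definition E4 (R : realType) : 'M[R]_7 := mmat 0 0 0 1 0 0.
Definition E5 (R : realType) : 'M[R]_7 := mmat 0 0 0 0 1 0.
Definition E6 (R : realType) : 'M[R]_7 := mmat 0 0 0 0 0 1.

Lemma mmat_decomp (R : realType) (u1 u2 u3 u4 u5 u6 : R) :
  mmat u1 u2 u3 u4 u5 u6 = u1 *: E1 R + u2 *: E2 R + u3 *: E3 R + u4 *: E4 R
                          + u5 *: E5 R + u6 *: E6 R.
Proof.
apply/matrixP => i j; rewrite !mxE.
case: i => [[|[|[|[|[|[|[|i]]]]]]] Hi]; case: j => [[|[|[|[|[|[|[|j]]]]]]] Hj] //=; ring.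
Qed.

Lemma in_m_eq (R : realType) (x : 'M[R]_7) : in_m x ->
  x = mmat (cf x 1 0) (cf x 2 0) (cf x 2 1) (cf x 3 0) (cf x 4 0) (cf x 5 0).
Proof. by case=> [u1 [u2 [u3 [u4 [u5 [u6 ->]]]]]]; rewrite !cf_mmat. Qed.
Arguments in_m_eq {R x}.
Arguments cf_mmat {R}.
Arguments cfD {R}.
Arguments cfZ {R}.
Arguments mmat_decomp {R}.



Lemma two_neq0 (R : realType) : (2 : R) != 0.
Proof. by rewrite pnatr_eq0. Qed.

Lemma L1 (R : realType) (a b c : R) : a * (a ^+ 2 + 2 * b * c) = 0 ->
  a * (a ^+ 2 + 2 * b * (c + 1)) = 0 -> a = 0.
Proof.
move=> h1 h2.
have hab : a * b = 0.
  have : 2 * (a * b) = 0.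
    by transitivity (a * (a ^+ 2 + 2 * b * (c + 1)) - a * (a ^+ 2 + 2 * b * c));
      [ring | rewrite h1 h2 subrr].
  by move/eqP; rewrite mulf_eq0 (negbTE (two_neq0 R)) /= => /eqP.
have : a ^+ 3 = 0.
  by transitivity (a * (a ^+ 2 + 2 * b * c) - 2 * (a * b) * c); [ring | rewrite h1 hab; ring].
by move/eqP; rewrite expf_eq0 /= => /eqP.
Qed.

Lemma L2 (R : realType) (a c : R) : a * (a * c) = 0 -> a * (a * (c + 1)) = 0 -> a = 0.
Proof.
move=> h1 h2.
have : a ^+ 2 = 0.
  by transitivity (a * (a * (c + 1)) - a * (a * c)); [ring | rewrite h1 h2 subrr].
by move/eqP; rewrite expf_eq0 /= => /eqP.
Qed.

Lemma L3 (R : realType) (a c : R) : a * (a * c) = 0 -> (a + 1) * ((a + 1) * c) = 0 -> c = 0.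
Proof.
move=> h1 h2.
have [ea|na] := eqVneq a 0; first by rewrite ea add0r !mul1r in h2.
by move/eqP: h1; rewrite !mulf_eq0 (negbTE na) /= => /eqP.
Qed.

Lemma L4 (R : realType) (a b c : R) : a != 0 -> (a + b) ^+ 2 * c = 0 ->
  (a + 2 * b) ^+ 2 * (2 * c) = 0 -> c = 0.
Proof.
move=> na h1 h2.
have [//|nc] := eqVneq c 0.
move/eqP: h1; rewrite mulf_eq0 (negbTE nc) orbF expf_eq0 /= => /eqP h1.
move/eqP: h2; rewrite !mulf_eq0 (negbTE nc) (negbTE (two_neq0 R)) !orbF orbb => /eqP h2.
have hb : b = 0 by transitivity ((a + 2 * b) - (a + b)); [ring | rewrite h1 h2 subrr].
by move: h1; rewrite hb addr0 => h1; rewrite h1 eqxx in na.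
Qed.
Arguments L1 {R a b c}.
Arguments L2 {R a c}.
Arguments L3 {R a c}.
Arguments L4 {R a b c}.



Theorem lemma3p7 (R : realType) :
  ~ exists b : {vspace 'M[R]_7},
      [/\ (\dim b = 3)%N,
          (forall x, x \in b -> in_m x),
          (forall x y, x \in b -> y \in b -> lie_br x y \in b)
        & (forall x, x \in b -> x != 0 -> \rank x = 2%N)].
Proof.
case=> S [hdim hm _ hrk].
have rk x : x \in S -> (\rank x <= 2)%N.
  move=> hx; have [->|nz] := eqVneq x 0; first by rewrite mxrank0.
  by rewrite hrk.
have F x : x \in S -> [/\ cf x 1 0 = 0, 4 * cf x 2 0 ^+ 2 = cf x 2 1 * cf x 3 0,
     cf x 3 0 * (cf x 3 0 ^+ 2 + 2 * cf x 2 0 * cf x 4 0) = 0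
   & cf x 2 1 * (2 * cf x 2 0 * cf x 3 0 + cf x 2 1 * cf x 4 0) = 0].
  move=> hx; have := rk x hx; rewrite {1}(in_m_eq (hm x hx)); exact: goodP.
have dim2 (V : {vspace 'M[R]_7}) : (\dim V <= 2)%N -> ~~ (S <= V)%VS.
  move=> hV; apply/negP => /dimvS; rewrite hdim => h.
  by have := leq_trans h hV.
have caseE5 : E5 R \in S -> False.
  move=> h5; apply: (negP (dim2 _ (dim_span [:: E5 R; E6 R]))).
  apply/subvP => x hx.
  have hx' : x + E5 R \in S by rewrite memvD.
  case: (F x hx) => a1 aQ a3 a4.
  case: (F _ hx'); rewrite !cfD /E5 !cf_mmat //= !addr0 => _ bQ b3 b4.
  have p4 : cf x 3 0 = 0 by apply: (L1 a3 b3).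
  have p2 : cf x 2 0 = 0.
    move: aQ; rewrite p4 mulr0 => /eqP; rewrite mulf_eq0 pnatr_eq0 /= expf_eq0 /=.
    by move/eqP.
  have p3 : cf x 2 1 = 0.
    by apply: (L2 (c := cf x 4 0)); [rewrite -a4 p2 p4 | rewrite -b4 p2 p4]; ring.
  rewrite (in_m_eq (hm x hx)) a1 p2 p3 p4 mmat_decomp !scale0r !add0r.
  by rewrite memvD // memvZ // memv_span // !inE eqxx ?orbT.
have caseE3 : E3 R \in S -> False.
  move=> h3; apply: (negP (dim2 _ (dim_span [:: E3 R; E6 R]))).
  apply/subvP => x hx.
  have hx' : x + E3 R \in S by rewrite memvD.
  case: (F x hx) => a1 aQ a3 a4.
  case: (F _ hx'); rewrite !cfD /E3 !cf_mmat //= !addr0 => _ bQ b3 b4.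
  have p4 : cf x 3 0 = 0.
    by transitivity ((cf x 2 1 + 1) * cf x 3 0 - cf x 2 1 * cf x 3 0); [ring | rewrite -aQ -bQ subrr].
  have p2 : cf x 2 0 = 0.
    move: aQ; rewrite p4 mulr0 => /eqP; rewrite mulf_eq0 pnatr_eq0 /= expf_eq0 /=.
    by move/eqP.
  have p5 : cf x 4 0 = 0.
    by apply: (L3 (a := cf x 2 1)); [rewrite -a4 p2 p4 | rewrite -b4 p2 p4]; ring.
  rewrite (in_m_eq (hm x hx)) a1 p2 p4 p5 mmat_decomp !scale0r !add0r !addr0.
  by rewrite memvD // memvZ // memv_span // !inE eqxx ?orbT.
pose N4 : {vspace 'M[R]_7} := <<[:: E2 R; E3 R; E5 R; E6 R]>>%VS.
pose T := (S :&: N4)%VS.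
have cfN4 x : x \in N4 -> cf x 3 0 = 0.
  move=> hx; rewrite (coord_span (X := in_tuple [:: E2 R; E3 R; E5 R; E6 R]) hx).
  rewrite /cf summxE big1 // => i _; rewrite mxE.
  by case: i => [[|[|[|[|i]]]] Hi] //=; rewrite /E2 /E3 /E5 /E6 mxE !inordK //= mulr0.
have hT : (2 <= \dim T)%N.
  have h1 := dimv_sum_cap S N4.
  have inL v : v \in N4 -> v \in (N4 + <[E4 R]>)%VS := subvP (addvSl _ _) v.
  have h2 : (S + N4 <= N4 + <[E4 R]>)%VS.
    rewrite subv_add addvSl andbT; apply/subvP => x hx.
    case: (F x hx) => a1 _ _ _.
    rewrite (in_m_eq (hm x hx)) a1 mmat_decomp scale0r add0r.
    repeat apply: memvD; apply: memvZ; try (apply: inL; apply: memv_span; by rewrite !inE eqxx ?orbT).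
    by apply: (subvP (addvSr _ _)); apply: memv_line.
  have [h3 _] := dimv_add_leqif N4 <[E4 R]>.
  have h4 := dimvS h2.
  have h5 : (\dim <[E4 R]> <= 1)%N by rewrite dim_vline leq_b1.
  rewrite hdim in h1; rewrite /T; move: h1 h3 h4 h5; move: (\dim (S + N4)) (\dim (S :&: N4)) (\dim N4) (\dim (N4 + <[E4 R]>)) (\dim <[E4 R]>) => a b c d e; lia.
have up (V : {vspace 'M[R]_7}) : (T <= V)%VS -> (\dim V <= 2)%N -> forall v, v \in V -> v \in S.
  move=> hTV hV v hv; have /eqP eTV : T == V by rewrite eqEdim hTV (leq_trans hV hT).
  by move: hv; rewrite -eTV => /memv_capP [].
have FT x : x \in T -> [/\ cf x 1 0 = 0, cf x 2 0 = 0, cf x 3 0 = 0 & cf x 2 1 ^+ 2 * cf x 4 0 = 0].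
  move=> /memv_capP [hS hN]; have p4 := cfN4 x hN.
  case: (F x hS) => a1 aQ _ a4.
  have p2 : cf x 2 0 = 0.
    move: aQ; rewrite p4 mulr0 => /eqP; rewrite mulf_eq0 pnatr_eq0 /= expf_eq0 /=.
    by move/eqP.
  split => //; by rewrite -a4 p2 p4; ring.
have TS x : x \in T -> x \in S by move=> /memv_capP [].
case: (classic (exists x, x \in T /\ cf x 2 1 != 0)) => [[x0 [hx0 nz]]|nex].
- apply: caseE3; apply: (up <<[:: E3 R; E6 R]>>%VS _ (dim_span _)); last first.
    by rewrite memv_span // mem_head.
  apply/subvP => y hy.
  case: (FT _ hx0) => a1 a2 a4 a35.
  have a5 : cf x0 4 0 = 0.
    by move/eqP: a35; rewrite mulf_eq0 expf_eq0 /= (negbTE nz) /= => /eqP.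
  have hy1 : x0 + y \in T by rewrite memvD.
  have hy2 : x0 + 2 *: y \in T by rewrite memvD // memvZ.
  case: (FT _ hy) => b1 b2 b4 _.
  case: (FT _ hy1); rewrite !cfD a5 add0r => _ _ _ h1.
  case: (FT _ hy2); rewrite !cfD !cfZ a5 add0r => _ _ _ h2.
  have b5 : cf y 4 0 = 0 by apply: (L4 nz h1 h2).
  rewrite (in_m_eq (hm y (TS y hy))) b1 b2 b4 b5 mmat_decomp !scale0r !add0r !addr0.
  by rewrite memvD // memvZ // memv_span // !inE eqxx ?orbT.
- apply: caseE5; apply: (up <<[:: E5 R; E6 R]>>%VS _ (dim_span _)); last first.
    by rewrite memv_span // mem_head.
  apply/subvP => y hy.
  case: (FT _ hy) => b1 b2 b4 _.
  have b3 : cf y 2 1 = 0.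
    have [//|ne] := eqVneq (cf y 2 1) 0.
    by exfalso; apply: nex; exists y.
  rewrite (in_m_eq (hm y (TS y hy))) b1 b2 b3 b4 mmat_decomp !scale0r !add0r.
  by rewrite memvD // memvZ // memv_span // !inE eqxx ?orbT.
Qed.
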